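(* Let $W=\mathfrak{S}_n$, $\ast=\mathrm{id}$, $w\in I_\ast$, and let $(s_{i_1},\dots,s_{i_k},w)$ be a reduced sequence with $k\ge3$ and $i_{k-2}=i_k=i_{k-1}\pm1$. Write $x=s_{i_k}$, $y=s_{i_{k-1}}$. Then exactly one of the following holds: (a) $xw\ne wx$, $yxwx\neq xwxy$, $xyxwxy\neq yxwxyx$, and $yw\neq wy$, $xywy\neq ywyx$, $yxywyx\neq xywyxy$; or (b) $xw\neq wx$, $yxwx\ne xwxy$, $xyxwxy=yxwxyx$, and $yw=wy$, $xyw\neq ywx$, $yxywx\neq xywxy$; or (c) $xw=wx$, $yxw\neq xwy$, $xyxwy\neq yxwyx$, and $yw\neq wy$, $xywy\ne ywyx$, $yxywyx=xywyxy$.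
   Context: $\mathfrak{S}_n$ with $s_i=(i,i+1)$, $S=\{s_1,\dots,s_{n-1}\}$; $I_\ast=\{w\in\mathfrak{S}_n:w^2=1\}$. For $s\in S$, $w\in I_\ast$: $s\ltimes w=sw$ if $sw=ws$, $s\ltimes w=sws$ otherwise; iterated from the right. $\rho(w)$ is the minimal $k$ with $w=s_{i_1}\ltimes\cdots\ltimes s_{i_k}\ltimes 1$. A sequence $(s_{i_1},\dots,s_{i_k},w)$ is reduced if $\rho(s_{i_1}\ltimes\cdots\ltimes s_{i_k}\ltimes w)=\rho(w)+k$. *)

(* Defs.v *)
From mathcomp Require Import all_boot all_fingroup.
Set Implicit Arguments. Unset Strict Implicit. Unset Printing Implicit Defensive.
Local Open Scope group_scope.

(* Simple transposition s_i = (i, i+1) of S_n, 1-based: for 1 <= i <= n-1 it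
   swaps the 0-based positions i-1 and i of 'I_n.  Outside that range it is
   the identity (never used, since indices are constrained). *)
Definition sgen (n i : nat) : 'S_n :=
  match @insub nat (fun k => k < n) _ i.-1, @insub nat (fun k => k < n) _ i with
  | Some a, Some b => tperm (a : 'I_n) (b : 'I_n)
  | _, _ => 1
  end.

Definition is_gen_index (n i : nat) : bool := (0 < i) && (i < n).

(* twisted involutions for * = id : w^2 = 1 *)
Definition is_invol (n : nat) (w : 'S_n) : bool := w * w == 1.

Definition ltimes (n : nat) (s w : 'S_n) : 'S_n :=
  if s * w == w * s then s * w else s * w * s.

Definition act_seq (n : nat) (idx : seq nat) (w : 'S_n) : 'S_n :=
  foldr (fun i v => ltimes (sgen n i) v) w idx.

Definition rho_is (n : nat) (w : 'S_n) (r : nat) : Prop :=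
  (exists idx : seq nat, [/\ size idx = r, all (is_gen_index n) idx
                           & act_seq idx 1 = w])
  /\ (forall idx : seq nat, all (is_gen_index n) idx -> act_seq idx 1 = w ->
        r <= size idx).

Definition reduced_seq (n : nat) (idx : seq nat) (w : 'S_n) : Prop :=
  exists r : nat, rho_is w r /\ rho_is (act_seq idx w) (r + size idx).

(* Main.v *)
Require Import Defs.
From mathcomp Require Import all_boot all_fingroup zify.
Set Implicit Arguments. Unset Strict Implicit. Unset Printing Implicit Defensive.
Definition conclG (T : Type) (m : T -> T -> T) (e : T -> T -> bool) (x y w : T) : bool :=
  let a := [&& ~~ e (m x w) (m w x), ~~ e (m (m (m y x) w) x) (m (m (m x w) x) y), ~~ e (m (m (m (m (m x y) x) w) x) y) (m (m (m (m (m y x) w) x) y) x), ~~ e (m y w) (m w y), ~~ e (m (m (m x y) w) y) (m (m (m y w) y) x) & ~~ e (m (m (m (m (m y x) y) w) y) x) (m (m (m (m (m x y) w) y) x) y)] in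
  let b := [&& ~~ e (m x w) (m w x), ~~ e (m (m (m y x) w) x) (m (m (m x w) x) y), e (m (m (m (m (m x y) x) w) x) y) (m (m (m (m (m y x) w) x) y) x), e (m y w) (m w y), ~~ e (m (m x y) w) (m (m y w) x) & ~~ e (m (m (m (m y x) y) w) x) (m (m (m (m x y) w) x) y)] in
  let c := [&& e (m x w) (m w x), ~~ e (m (m y x) w) (m (m x w) y), ~~ e (m (m (m (m x y) x) w) y) (m (m (m (m y x) w) y) x), ~~ e (m y w) (m w y), ~~ e (m (m (m x y) w) y) (m (m (m y w) y) x) & e (m (m (m (m (m y x) y) w) y) x) (m (m (m (m (m x y) w) y) x) y)] in
  [|| [&& a, ~~ b & ~~ c], [&& ~~ a, b & ~~ c] | [&& ~~ a, ~~ b & c]].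

Lemma conclG_nat T1 T2 (m1 : T1->T1->T1) (e1 : T1->T1->bool) (m2 : T2->T2->T2)
  (e2 : T2->T2->bool) (f : T1 -> T2) x y w :
  (forall a b, f (m1 a b) = m2 (f a) (f b)) -> (forall a b, e2 (f a) (f b) = e1 a b) ->
  conclG m2 e2 (f x) (f y) (f w) = conclG m1 e1 x y w.
Proof. by move=> Hm He; rewrite /conclG -!Hm !He. Qed.

Definition ltG T (m : T->T->T) (e : T->T->bool) s v :=
  if e (m s v) (m v s) then m s v else m (m s v) s.

Lemma ltG_nat T1 T2 (m1 : T1->T1->T1) (e1 : T1->T1->bool) (m2 : T2->T2->T2)
  (e2 : T2->T2->bool) (f : T1 -> T2) s v :
  (forall a b, f (m1 a b) = m2 (f a) (f b)) -> (forall a b, e2 (f a) (f b) = e1 a b) ->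
  ltG m2 e2 (f s) (f v) = f (ltG m1 e1 s v).
Proof. by move=> Hm He; rewrite /ltG -!Hm He; case: (e1 _ _). Qed.

Inductive letter := Tl of nat & nat | Wl.

Definition letter_eqb (a b : letter) := match a, b with
  | Tl x y, Tl x' y' => (x == x') && (y == y') | Wl, Wl => true | _, _ => false end.

Definition cget (c : nat * nat * nat) i := nth 3 [:: c.1.1; c.1.2; c.2] i.
Definition Vs (c : nat * nat * nat) := [:: 0; 1; 2] ++ [seq 3 + i | i <- [:: 0; 1; 2] & 3 <= cget c i].
Definition wm c l := if l < 3 then (if cget c l < 3 then cget c l else 3 + l) else l - 3.
Definition tm (a b l : nat) := if l == a then b else if l == b then a else l.
Definition evml c (x : letter) l := match x with Tl a b => tm a b l | Wl => wm c l end.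
Definition evm c (u : seq letter) l := foldl (fun acc x => evml c x acc) l u.
Definition isW x := if x is Wl then true else false.
Definition par (u : seq letter) := odd (count isW u).

Lemma tpE n (a b z : 'I_n) : tperm a b z = if z == a then b else if z == b then a else z.
Proof. by case: tpermP => [->|->|/eqP/negbTE-> /eqP/negbTE->]; rewrite ?eqxx //; case: eqP. Qed.

Lemma ord_neq n (a b : 'I_n) : a <> b -> nat_of_ord a <> nat_of_ord b.
Proof. by move=> H E; apply: H; apply: val_inj. Qed.

Section Refl.
Variables (n : nat) (w : 'S_n) (q0 q1 q2 : 'I_n).
Hypothesis ww : (w * w = 1)%g.
Hypothesis h1 : nat_of_ord q1 = q0.+1.
Hypothesis h2 : nat_of_ord q2 = q0.+2.

Definition P := [:: q0; q1; q2].
Definition qq i := nth q0 P i.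
Definition phi l := if l < 3 then qq l else w (qq (l - 3)).
Definition evl x : 'S_n := match x with Tl a b => tperm (qq a) (qq b) | Wl => w end.
Definition ev (u : seq letter) : 'S_n := foldr (fun x acc => evl x * acc)%g 1%g u.

Definition matches c := forall i, i < 3 ->
  (cget c i < 3 -> w (qq i) = qq (cget c i)) /\ (3 <= cget c i -> w (qq i) \notin P).

Lemma wwj j : w (w j) = j. Proof. by rewrite -permM ww perm1. Qed.

Lemma qq_inj i j : i < 3 -> j < 3 -> qq i = qq j -> i = j.
Proof.
rewrite /qq /P => hi hj /(congr1 val).
by case: i hi => [|[|[|]]] //= _; case: j hj => [|[|[|]]] //= _; rewrite ?h1 ?h2; lia.
Qed.

Lemma qqP i : i < 3 -> qq i \in P.
Proof. by rewrite /qq /P; case: i => [|[|[|]]] //= _; rewrite !inE eqxx ?orbT. Qed.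

Lemma inP j : j \in P -> exists2 i, i < 3 & j = qq i.
Proof. by rewrite /P !inE => /or3P[]/eqP->; [exists 0|exists 1|exists 2]. Qed.

Lemma ev_cat u v : ev (u ++ v) = (ev u * ev v)%g.
Proof. by elim: u => [|x u IH] /=; rewrite ?mul1g // IH mulgA. Qed.

Lemma ev_eval u j : ev u j = foldl (fun acc x => evl x acc) j u.
Proof. elim: u j => [|x u IH] j /=; first by rewrite perm1. by rewrite permM IH. Qed.

Lemma inVs c l : (l \in Vs c) = (l < 3) || ((3 <= l < 6) && (3 <= cget c (l - 3))).
Proof.
rewrite /Vs mem_cat !inE; case: l => [|[|[|[|[|[|l]]]]]] //=;
by rewrite /cget /=; case: (3 <= _); case: (3 <= _); case: (3 <= _).
Qed.

Lemma step c x l : matches c -> (if x is Tl a b then (a < 3) && (b < 3) else true) ->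
  l \in Vs c -> (evml c x l \in Vs c) /\ evl x (phi l) = phi (evml c x l).
Proof.
move=> M; rewrite inVs; case: x => [a b /andP[ha hb]|] /=.
  case/orP => [hl|/andP[hl hc]].
    rewrite /tm /phi; have e : forall i j, i < 3 -> j < 3 -> (qq i == qq j) = (i == j).
      by move=> i j hi hj; apply/eqP/eqP => [/qq_inj|->]; [apply|].
    rewrite hl tpE !e //.
    by case: ifP => _; [|case: ifP => _]; rewrite inVs ?ha ?hb ?hl.
  have la : (l == a) = false by apply/eqP => E; move: hl; rewrite E; lia.
  have lb : (l == b) = false by apply/eqP => E; move: hl; rewrite E; lia.
  rewrite /tm la lb inVs hl hc orbT; split => //.
  rewrite /phi ltnNge (proj1 (andP hl)) /=.
  have [_ /(_ hc) hn] := M (l - 3) ltac:(lia).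
  rewrite tpermD //; apply: contraNneq hn => <-; exact: qqP.
move=> _; case/orP => [hl|/andP[hl hc]].
  have [hin hout] := M l hl.
  rewrite /wm hl; case: ltnP => hcl.
    by rewrite inVs hcl; split => //; rewrite /phi hl hcl hin.
  rewrite inVs /= (_ : 3 + l - 3 = l) ?hcl ?andbT; last lia.
  by split; [lia | rewrite /phi hl /= (_ : 3 + l - 3 = l) //; lia].
rewrite /wm ltnNge (proj1 (andP hl)) /= inVs; split; first lia.
by rewrite /phi ltnNge (proj1 (andP hl)) /= wwj; case: ifP => //; lia.
Qed.

Definition okl x := if x is Tl a b then (a < 3) && (b < 3) else true.

Lemma word c u l : matches c -> all okl u -> l \in Vs c ->
  (evm c u l \in Vs c) /\ ev u (phi l) = phi (evm c u l).
Proof.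
move=> M; rewrite /evm; elim: u l => [|x u IH] l /=; first by rewrite perm1.
case/andP=> hx hu hl; have [h' e] := @step c x l M hx hl.
by rewrite permM e; apply: IH.
Qed.

Lemma phi_inj c l l' : matches c -> l \in Vs c -> l' \in Vs c -> phi l = phi l' -> l = l'.
Proof.
move=> M; rewrite !inVs /phi.
case/orP=> [hl|/andP[hl hc]]; case/orP=> [hl'|/andP[hl' hc']].
- by rewrite hl hl'; apply: qq_inj.
- rewrite hl ltnNge (proj1 (andP hl')) /= => E.
  have [_ /(_ hc') hn] := M (l' - 3) ltac:(lia).
  by move: hn; rewrite -E qqP.
- rewrite hl' ltnNge (proj1 (andP hl)) /= => E.
  have [_ /(_ hc) hn] := M (l - 3) ltac:(lia).
  by move: hn; rewrite E qqP.
- rewrite ltnNge (proj1 (andP hl)) ltnNge (proj1 (andP hl')) /= => /perm_inj/qq_inj.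
  move=> /(_ ltac:(lia) ltac:(lia)); lia.
Qed.

Lemma outside u j : j \notin P -> w j \notin P -> all okl u ->
  ev u j = if odd (count isW u) then w j else j.
Proof.
move=> hj hwj; elim: u j hj hwj => [|x u IH] j hj hwj /=; first by rewrite perm1.
case/andP=> hx hu; rewrite permM; case: x hx => [a b /andP[ha hb]|_] /=.
  rewrite tpermD; first by rewrite add0n; apply: IH.
    by apply: contraNneq hj => <-; exact: qqP.
  by apply: contraNneq hj => <-; exact: qqP.
rewrite IH ?wwj //; by case: odd.
Qed.

Lemma eqP_model c u u' : matches c -> all okl u -> all okl u' ->
  odd (count isW u) = odd (count isW u') ->
  (ev u == ev u') = all (fun l => evm c u l == evm c u' l) (Vs c).
Proof.
move=> M hu hu' hp; apply/eqP/allP => [E l hl|H].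
  have [a1 e1] := word M hu hl; have [a2 e2] := word M hu' hl.
  by apply/eqP; apply: (phi_inj M a1 a2); rewrite -e1 -e2 E.
apply/permP => j.
case jP: (j \in P).
  have [i hi ->] := inP jP.
  have hl : i \in Vs c by rewrite inVs hi.
  have [a1 e1] := word M hu hl; have [a2 e2] := word M hu' hl.
  by move: e1 e2; rewrite /phi hi => -> ->; rewrite (eqP (H i hl)).
case wjP: (w j \in P).
  have [i hi ej] := inP wjP.
  have jv : exists2 l, l \in Vs c & j = phi l.
    have [hin hout] := M i hi.
    case: (ltnP (cget c i) 3) => hc.
      exists (cget c i); first by rewrite inVs hc.
      by rewrite /phi hc -(hin hc) -ej wwj.
    exists (3 + i); first by rewrite inVs addKn hc andbT; apply/orP; right; lia.
    by rewrite /phi addKn ltnNge leq_addr /= -ej wwj.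
  case: jv => l hl ->.
  have [a1 e1] := word M hu hl; have [a2 e2] := word M hu' hl.
  by rewrite e1 e2 (eqP (H l hl)).
by rewrite !outside ?jP ?wjP // hp.
Qed.

Definition eqm c u u' := if [&& odd (count isW u) == odd (count isW u'), all okl u & all okl u']
  then all (fun l => evm c u l == evm c u' l) (Vs c) else ev u == ev u'.

Lemma eqm_ok c u u' : matches c -> (ev u == ev u') = eqm c u u'.
Proof.
move=> M; rewrite /eqm; case: ifP => // /and3P[/eqP hp hu hu'].
exact: eqP_model.
Qed.

Definition cons_ok c := all (fun i => (cget c i < 3) ==> (cget c (cget c i) == i)) [:: 0; 1; 2].

Lemma cons_okP c : matches c -> cons_ok c.
Proof.
move=> M; apply/allP => i; rewrite !inE => hi.
have hi3 : i < 3 by case/or3P: hi => /eqP->.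
apply/implyP => hc; have [hin _] := M i hi3.
have [hin' hout'] := M _ hc.
case: (ltnP (cget c (cget c i)) 3) => hcc.
  by apply/eqP; apply: qq_inj => //; rewrite -(hin' hcc) -(hin hc) wwj.
by move: (hout' hcc); rewrite -(hin hc) wwj (qqP hi3).
Qed.

Definition facts c := all (fun l => (l < 3) || (phi l < q0) || (q0.+2 < phi l)) (Vs c) &&
  all (fun l => all (fun l' => (l == l') || (val (phi l) != val (phi l'))) (Vs c)) (Vs c).

Lemma factsP c : matches c -> facts c.
Proof.
move=> M; apply/andP; split; apply/allP => l hl.
  move: (hl); rewrite inVs => /orP[->//|/andP[h hc]].
  have [_ /(_ hc) hn] := M (l - 3) ltac:(lia).
  rewrite /phi ltnNge (proj1 (andP h)) /=.
  move: hn; rewrite /P !inE => /norP[/eqP/ord_neq ? /norP[/eqP/ord_neq ? /eqP/ord_neq ?]]; lia.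
apply/allP => l' hl'; case: eqP => //= ne; apply/negP => /eqP/val_inj E.
exact: ne (phi_inj M hl hl' E).
Qed.

Lemma matches_idx : matches (index (w q0) P, index (w q1) P, index (w q2) P).
Proof.
have key : forall x, (index x P < 3 -> x = nth q0 P (index x P)) /\ (3 <= index x P -> x \notin P).
  move=> x; rewrite -[3]/(size P) index_mem; split => h; [by rewrite (nth_index q0 h) | by move: h; rewrite leqNgt index_mem].
move=> i; case: i => [|[|[|]]] // _; [exact: (key (w q0)) | exact: (key (w q1)) | exact: (key (w q2))].
Qed.
End Refl.


Lemma okl_ltG e (s v : seq letter) : all okl s -> all okl v -> all okl (ltG cat e s v).
Proof. by rewrite /ltG => hs hv; case: e; rewrite !all_cat ?hs ?hv. Qed.

Lemma local_gen n (w : 'S_n) (q0 q1 q2 : 'I_n) (a b : nat) :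
  (w * w = 1)%g -> nat_of_ord q1 = q0.+1 -> nat_of_ord q2 = q0.+2 ->
  ((a == 0) && (b == 1)) || ((a == 1) && (b == 0)) ->
  let x := tperm (qq q0 q1 q2 a) (qq q0 q1 q2 a.+1) in
  let y := tperm (qq q0 q1 q2 b) (qq q0 q1 q2 b.+1) in
  w (qq q0 q1 q2 a) < w (qq q0 q1 q2 a.+1) ->
  ltimes x w (qq q0 q1 q2 b) < ltimes x w (qq q0 q1 q2 b.+1) ->
  ltimes y (ltimes x w) (qq q0 q1 q2 a) < ltimes y (ltimes x w) (qq q0 q1 q2 a.+1) ->
  conclG (@mulg _) (@eq_op _) x y w.
Proof.
move=> ww h1 h2 hab x y.
have [c [M cb]] : exists c, matches w q0 q1 q2 c /\ [&& c.1.1 < 4, c.1.2 < 4 & c.2 < 4].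
  exists (index (w q0) (P q0 q1 q2), index (w q1) (P q0 q1 q2), index (w q2) (P q0 q1 q2)).
  split; first exact: matches_idx.
  by apply/and3P; split; apply: (@leq_ltn_trans 3); [exact: index_size| |exact: index_size| |exact: index_size|].
have Hm : forall u v, ev w q0 q1 q2 (u ++ v) = (ev w q0 q1 q2 u * ev w q0 q1 q2 v)%g.
  exact: ev_cat.
have He : forall u v, (ev w q0 q1 q2 u == ev w q0 q1 q2 v) = eqm w q0 q1 q2 c u v.
  by move=> u v; apply: eqm_ok.
have ex : x = ev w q0 q1 q2 [:: Tl a a.+1] by rewrite [RHS]/ev [foldr _ _ _]/= mulg1.
have ey : y = ev w q0 q1 q2 [:: Tl b b.+1] by rewrite [RHS]/ev [foldr _ _ _]/= mulg1.
have ew : w = ev w q0 q1 q2 [:: Wl] by rewrite [RHS]/ev [foldr _ _ _]/= mulg1.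
have C : conclG (@mulg _) (@eq_op _) (ev w q0 q1 q2 [:: Tl a a.+1]) (ev w q0 q1 q2 [:: Tl b b.+1]) (ev w q0 q1 q2 [:: Wl])
   = conclG cat (eqm w q0 q1 q2 c) [:: Tl a a.+1] [:: Tl b b.+1] [:: Wl] by apply: conclG_nat.
rewrite -ex -ey -ew in C; rewrite C.
have L1 : ltG (@mulg _) (@eq_op _) (ev w q0 q1 q2 [:: Tl a a.+1]) (ev w q0 q1 q2 [:: Wl])
   = ev w q0 q1 q2 (ltG cat (eqm w q0 q1 q2 c) [:: Tl a a.+1] [:: Wl]) by apply: ltG_nat.
rewrite -ex -ew in L1.
have L2 : ltG (@mulg _) (@eq_op _) (ev w q0 q1 q2 [:: Tl b b.+1]) (ev w q0 q1 q2 (ltG cat (eqm w q0 q1 q2 c) [:: Tl a a.+1] [:: Wl]))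
   = ev w q0 q1 q2 (ltG cat (eqm w q0 q1 q2 c) [:: Tl b b.+1] (ltG cat (eqm w q0 q1 q2 c) [:: Tl a a.+1] [:: Wl])) by apply: ltG_nat.
rewrite -ey in L2.
have ltE : forall s v : 'S_n, ltimes s v = ltG (@mulg _) (@eq_op _) s v by [].
rewrite !ltE L1 L2.
have hab3 : [&& a < 3, a.+1 < 3, b < 3 & b.+1 < 3] by case/orP: hab => /andP[/eqP-> /eqP->].
case/and4P: hab3 => ha ha' hb hb'.
have W : forall U k, all okl U -> k < 3 -> ev w q0 q1 q2 U (qq q0 q1 q2 k) = phi w q0 q1 q2 (evm c U k).
  move=> U k hU hk; have hv : k \in Vs c by rewrite inVs hk.
  by have [_ <-] := word ww h1 h2 M hU hv; rewrite /phi hk.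
have okX : all okl [:: Tl a a.+1] by rewrite /= ha ha'.
have okY : all okl [:: Tl b b.+1] by rewrite /= hb hb'.
have okW : all okl [:: Wl] by [].
have W0 : forall k, k < 3 -> w (qq q0 q1 q2 k) = phi w q0 q1 q2 (evm c [:: Wl] k).
  by move=> k hk; rewrite -(W _ _ okW hk) -ew.
rewrite !W0 // !W //; try by do ! apply: okl_ltG.
have Hc : cons_ok c by apply: cons_okP M.
have Hf : facts w q0 q1 q2 c by apply: factsP M.
clear -cb Hc Hf h1 h2 hab.
case/orP: hab => /andP[/eqP-> /eqP->]; case: c cb Hc Hf => [[c0 c1] c2]; case/and3P => hc0 hc1 hc2.
all: move: hc0 hc1 hc2; rewrite [(_,_,_).1.1]/= [(_,_,_).1.2]/= [(_,_,_).2]/=.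
all: case: c0 => [|[|[|[|//]]]] _; case: c1 => [|[|[|[|//]]]] _; case: c2 => [|[|[|[|//]]]] _.
all: move=> Hc; try by [].
all: move=> Hf; rewrite /facts /= in Hf.
all: rewrite /conclG /eqm /ltG /=.
all: rewrite /phi /wm /tm /cget /qq /= in Hf *.
all: move=> *; lia.
Qed.

Definition invc n (v : 'S_n) := \sum_(ij : 'I_n * 'I_n) ((ij.1 < ij.2) && (v ij.2 < v ij.1)).
Definition nf n (v : 'S_n) := \sum_(j : 'I_n) (v j != j).
Definition Fv n (v : 'S_n) := invc v + invc v + nf v.

Lemma sum_diff2 (T : finType) (f g : T -> nat) a b : a != b ->
  (forall j, j != a -> j != b -> f j = g j) ->
  \sum_j f j + (g a + g b) = \sum_j g j + (f a + f b).
Proof.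
move=> ab H.
have E : forall h : T -> nat, \sum_j h j = h a + (h b + \sum_(j | (j != a) && (j != b)) h j).
  move=> h; rewrite (bigD1 a) //= (bigD1 b) /=; last by rewrite eq_sym.
  by congr (_ + (_ + _)); apply: eq_bigl => j; rewrite andbC.
rewrite !E; have -> : \sum_(j | (j != a) && (j != b)) f j = \sum_(j | (j != a) && (j != b)) g j.
  by apply: eq_bigr => j /andP[]; apply: H.
lia.
Qed.

Lemma ltn_tp n (p p' i j : 'I_n) : nat_of_ord p' = p.+1 ->
  (i, j) != (p, p') -> (i, j) != (p', p) ->
  (tperm p p' i < tperm p p' j) = (i < j).
Proof.
move=> hp h1 h2; rewrite !tpE.
case: (i =P p) => [ei|/ord_neq ei]; case: (j =P p) => [ej|/ord_neq ej];
case: (i =P p') => [ei'|/ord_neq ei']; case: (j =P p') => [ej'|/ord_neq ej'];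
rewrite ?ei ?ej ?ei' ?ej' in h1 h2 *; rewrite ?eqxx in h1 h2; try discriminate;
try (move: ei; rewrite ei'; move/(congr1 val) => /=; lia);
try (move: ej; rewrite ej'; move/(congr1 val) => /=; lia);
apply/idP/idP; lia.
Qed.

Lemma inv_tp n (v : 'S_n) (p p' : 'I_n) : nat_of_ord p' = p.+1 ->
  invc (tperm p p' * v)%g + (v p' < v p) = invc v + (v p < v p').
Proof.
move=> hp; rewrite /invc.
have inj : injective (fun ij : 'I_n * 'I_n => (tperm p p' ij.1, tperm p p' ij.2)).
  by move=> [i j] [i' j'] /= [/perm_inj -> /perm_inj ->].
rewrite (reindex_inj inj) /=.
under eq_bigr => ij _ do rewrite !permM !tpermK.
have pp : (p, p') != (p', p).
  apply/eqP => -[E _]; move: hp; rewrite E; lia.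
have := @sum_diff2 _ (fun ij : 'I_n * 'I_n => (tperm p p' ij.1 < tperm p p' ij.2) && (v ij.2 < v ij.1))
  (fun ij => (ij.1 < ij.2) && (v ij.2 < v ij.1)) _ _ pp.
rewrite /= tpermL tpermR.
have e1 : (p < p') = true by apply/idP; lia.
have e2 : (p' < p) = false by apply/negbTE; lia.
rewrite e1 e2 /= addn0 add0n => ->; first by rewrite addnC.
by move=> [i j] h1 h2 /=; rewrite ltn_tp.
Qed.

Lemma inv_inv n (v : 'S_n) : invc v^-1%g = invc v.
Proof.
rewrite /invc.
have inj : injective (fun ij : 'I_n * 'I_n => (v ij.2, v ij.1)).
  by move=> [i j] [i' j'] /= [/perm_inj -> /perm_inj ->].
rewrite (reindex_inj inj) /=; apply: eq_bigr => -[i j] _ /=.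
by rewrite !permK andbC.
Qed.

Lemma nf_conj n (v : 'S_n) p p' : nf (tperm p p' * v * tperm p p')%g = nf v.
Proof.
rewrite /nf (reindex_inj (@perm_inj _ (tperm p p'))) /=.
by apply: eq_bigr => j _; rewrite !permM tpermK (inj_eq perm_inj).
Qed.

Lemma nf_fix n (v : 'S_n) (p p' : 'I_n) : p != p' -> v p = p -> v p' = p' ->
  nf (tperm p p' * v)%g = nf v + 2.
Proof.
move=> pp vp vp'; rewrite /nf.
have K : \sum_j ((tperm p p' * v)%g j != j) + ((v p != p) + (v p' != p')) =
          \sum_j (v j != j) + (((tperm p p' * v)%g p != p) + ((tperm p p' * v)%g p' != p')).
  by apply: sum_diff2 => // j jp jp'; rewrite permM tpermD // eq_sym.
move: K; rewrite !permM tpermL tpermR vp vp' !eqxx /= (negbTE pp) eq_sym (negbTE pp) /=; rewrite add0n addn0 => K; exact: K.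
Qed.

Lemma nf_swap n (v : 'S_n) (p p' : 'I_n) : p != p' -> v p = p' -> v p' = p ->
  nf (tperm p p' * v)%g + 2 = nf v.
Proof.
move=> pp vp vp'; rewrite /nf.
have K : \sum_j ((tperm p p' * v)%g j != j) + ((v p != p) + (v p' != p')) =
          \sum_j (v j != j) + (((tperm p p' * v)%g p != p) + ((tperm p p' * v)%g p' != p')).
  by apply: sum_diff2 => // j jp jp'; rewrite permM tpermD // eq_sym.
move: K; rewrite !permM tpermL tpermR vp vp' !eqxx /= (negbTE pp) eq_sym (negbTE pp) /=; rewrite add0n addn0 => K; exact: K.
Qed.

Lemma invol_inv n (v : 'S_n) : (v * v = 1)%g -> v^-1%g = v.
Proof. by move=> ww; rewrite -[RHS]mul1g -(mulVg v) -mulgA ww mulg1. Qed.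

Lemma comm_C1 n (v : 'S_n) (p p' : 'I_n) : p != p' ->
  (tperm p p' * v)%g = (v * tperm p p')%g ->
  (v p = p /\ v p' = p') \/ (v p = p' /\ v p' = p).
Proof.
move=> pp /permP/(_ p); rewrite !permM tpermL.
case: (tpermP p p' (v p)) => [->|->|h h'] E; [by left | by right |].
by move/perm_inj: E => /eqP; rewrite eq_sym (negbTE pp).
Qed.

Lemma comm_C2 n (v : 'S_n) (p p' : 'I_n) :
  ((v p = p /\ v p' = p') \/ (v p = p' /\ v p' = p)) ->
  (tperm p p' * v)%g = (v * tperm p p')%g.
Proof.
move=> H; apply/permP => j; rewrite !permM.
case: (tpermP p p' j) => [->|->|h h'].
- by case: H => -[-> ->]; rewrite ?tpermL ?tpermR.
- by case: H => -[-> ->]; rewrite ?tpermL ?tpermR.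
- rewrite tpermD //.
    by apply/eqP => E; case: H => -[e1 e2]; [apply: h | apply: h'];
       apply: (@perm_inj _ v); rewrite ?e1 ?e2 E.
  by apply/eqP => E; case: H => -[e1 e2]; [apply: h' | apply: h];
       apply: (@perm_inj _ v); rewrite ?e1 ?e2 E.
Qed.

Lemma Fstep n (v : 'S_n) (p p' : 'I_n) : (v * v = 1)%g -> nat_of_ord p' = p.+1 ->
  if v p < v p' then Fv (ltimes (tperm p p') v) = Fv v + 4
  else Fv (ltimes (tperm p p') v) + 4 = Fv v.
Proof.
move=> ww hp.
have pp : p != p' by apply/eqP => /(congr1 val) /=; lia.
have vv := invol_inv ww.
have vpp : v p != v p' by rewrite (inj_eq perm_inj).
have e1 : (p < p') = true by apply/idP; lia.
have e2 : (p' < p) = false by apply/negbTE; lia.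
rewrite /ltimes /Fv.
case: (boolP ((tperm p p' * v)%g == (v * tperm p p')%g)) => [/eqP comm|/eqP comm].
  have := inv_tp v hp.
  case: (comm_C1 pp comm) => -[f1 f2]; rewrite f1 f2 e1 e2.
    have := nf_fix pp f1 f2; move=> /= A B; rewrite addn0 addn1 in B; rewrite A B; lia.
  have := nf_swap pp f1 f2; move=> /= A B; rewrite addn0 in B; set iX := invc (tperm p p' * v)%g in A B *; set nX := nf (tperm p p' * v)%g in A B *; lia.
have nc : ~ ((v p = p /\ v p' = p') \/ (v p = p' /\ v p' = p)) by move/comm_C2.
have A : invc (tperm p p' * v * tperm p p')%g = invc (tperm p p' * (v * tperm p p'))%g.
  by rewrite -inv_inv !invMg tpermV vv mulgA.
have B : invc (v * tperm p p')%g = invc (tperm p p' * v)%g.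
  by rewrite -inv_inv !invMg tpermV vv.
have C1 := inv_tp (v * tperm p p')%g hp.
have C2 := inv_tp v hp.
rewrite !permM in C1.
have n1 : (v p, v p') != (p, p') by apply/eqP => -[f1 f2]; apply: nc; left.
have n2 : (v p, v p') != (p', p) by apply/eqP => -[f1 f2]; apply: nc; right.
have n3 : (v p', v p) != (p, p') by apply/eqP => -[f1 f2]; apply: nc; right.
have n4 : (v p', v p) != (p', p) by apply/eqP => -[f1 f2]; apply: nc; left.
rewrite !ltn_tp // in C1.
rewrite A nf_conj; rewrite B in C1.
case: ltngtP => h; last by move/eqP: vpp; move/val_inj: h.
all: move: C1 C2; rewrite ?h ?(ltnW h) /=.
all: move=> C1 C2; set a1 := invc (tperm p p' * (v * tperm p p'))%g in C1 C2 *;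
  set a2 := invc (tperm p p' * v)%g in C1 C2 *; set a3 := invc v in C1 C2 *; set a4 := nf v in C1 C2 *.
all: move: C1 C2.
- have -> : (v p' < v p) = false by apply/negbTE; rewrite -leqNgt ltnW.
  rewrite /= !addn0; lia.
- have -> : (v p < v p') = false by apply/negbTE; rewrite -leqNgt ltnW.
  rewrite /= !addn0; lia.
Qed.

Lemma sgenE n i : 0 < i < n -> exists p p' : 'I_n,
  [/\ nat_of_ord p = i.-1, nat_of_ord p' = i & sgen n i = tperm p p'].
Proof.
case/andP=> hi hn.
have h1 : i.-1 < n by lia.
exists (Ordinal h1), (Ordinal hn); split => //.
by rewrite /sgen (insubT (fun k => k < n) h1) (insubT (fun k => k < n) hn).
Qed.

Lemma lt_invol n (s v : 'S_n) : (s * s = 1)%g -> (v * v = 1)%g -> (ltimes s v * ltimes s v = 1)%g.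
Proof.
move=> ss vv; rewrite /ltimes; case: ifP => /eqP c.
  by rewrite !mulgA c -(mulgA v s s) ss mulg1 vv.
by rewrite !mulgA -(mulgA (s * v)%g s s) ss mulg1 -(mulgA s v v) vv mulg1 ss.
Qed.

Lemma lt_back n (s v : 'S_n) : (s * s = 1)%g -> ltimes s (ltimes s v) = v.
Proof.
move=> ss; rewrite /ltimes; case E: (s * v == v * s)%g; move/eqP: E => c.
  have -> : (s * (s * v) == s * v * s)%g.
    by rewrite mulgA ss mul1g c -mulgA ss mulg1.
  by rewrite mulgA ss mul1g.
have -> : (s * (s * v * s) == s * v * s * s)%g = false.
  apply/negP => /eqP E; apply: c.
  by move: E; rewrite !mulgA ss mul1g -mulgA ss mulg1 => ->.
by rewrite !mulgA ss mul1g -mulgA ss mulg1.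
Qed.

Lemma F1 n : Fv (1 : 'S_n)%g = 0.
Proof.
have I1 : invc (1 : 'S_n)%g = 0.
  rewrite /invc big1 // => -[i j] _; rewrite !perm1 /=.
  have : ~~((i < j) && (j < i)) by apply/negP => /andP[]; lia.
  by move/negbTE->.
have N1 : nf (1 : 'S_n)%g = 0 by rewrite /nf big1 // => j _; rewrite perm1 eqxx.
by rewrite /Fv I1 N1.
Qed.

Lemma descent n (v : 'S_n) : (v * v = 1)%g -> v != 1%g ->
  exists p p' : 'I_n, nat_of_ord p' = p.+1 /\ v p' < v p.
Proof.
move=> ww hv.
case: (boolP [exists p : 'I_n, exists p' : 'I_n, (nat_of_ord p' == p.+1) && (v p' < v p)]).
  by move=> /existsP[p /existsP[p' /andP[/eqP e h]]]; exists p, p'.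
rewrite negb_exists => /forallP H.
have mono : forall k (hk : k < n), k <= v (Ordinal hk).
  elim=> [//|k IH] hk.
  have hk' : k < n by lia.
  have := H (Ordinal hk'); rewrite negb_exists => /forallP /(_ (Ordinal hk)) /=.
  rewrite eqxx /= -leqNgt => le.
  have ne : v (Ordinal hk') != v (Ordinal hk).
    by rewrite (inj_eq perm_inj); apply/eqP => /(congr1 val) /=; lia.
  have := IH hk'; move/eqP: ne => /ord_neq ne; lia.
have mono' : forall i : 'I_n, i <= v i by move=> [k hk]; apply: mono.
case/negP: hv; apply/eqP/permP => i; rewrite perm1; apply: val_inj => /=.
have := mono' i; have := mono' (v i); rewrite -permM ww perm1; lia.
Qed.

Lemma gen_tperm n i : is_gen_index n i -> exists p p' : 'I_n,
  [/\ nat_of_ord p = i.-1, nat_of_ord p' = i, nat_of_ord p' = p.+1 & sgen n i = tperm p p'].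
Proof.
move=> hi; have [p [p' [h1 h2 E]]] := sgenE hi.
exists p, p'; split => //; move: hi; rewrite /is_gen_index; lia.
Qed.

Lemma act_bound n idx (v : 'S_n) : all (is_gen_index n) idx -> (v * v = 1)%g ->
  (act_seq idx v * act_seq idx v = 1)%g /\ Fv (act_seq idx v) <= Fv v + 4 * size idx.
Proof.
elim: idx => [|i idx IH] /=; first by rewrite muln0 addn0.
case/andP=> hi hidx vv; have [I1 B] := IH hidx vv.
have [p [p' [_ _ pp' ->]]] := gen_tperm hi.
split; first by apply: lt_invol => //; exact: tperm2.
have := @Fstep _ _ p p' I1 pp'; case: ifP => _ E; rewrite ?E; lia.
Qed.

Lemma word_exists n (v : 'S_n) : (v * v = 1)%g -> exists idx,
  [/\ all (is_gen_index n) idx, act_seq idx 1%g = v & 4 * size idx = Fv v].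
Proof.
have : forall m (v : 'S_n), Fv v < m -> (v * v = 1)%g -> exists idx,
  [/\ all (is_gen_index n) idx, act_seq idx 1%g = v & 4 * size idx = Fv v]; last first.
  by move=> H; apply: H (ltnSn _).
elim=> [//|m IH] {}v hv vv.
case: (eqVneq v 1%g) => [->|ne]; first by exists [::]; rewrite F1.
have [p [p' [pp' des]]] := descent vv ne.
have gi : is_gen_index n p' by rewrite /is_gen_index; have := ltn_ord p'; move=> ?; apply/andP; split; lia.
have [P [P' [h1 h2 _ E]]] := gen_tperm gi.
have eP : P = p by apply: val_inj => /=; rewrite h1; lia.
have eP' : P' = p' by apply: val_inj.
rewrite eP eP' in E.
have := @Fstep _ _ p p' vv pp'; rewrite ltnNge (ltnW des) /= => F.
set v' := ltimes (tperm p p') v in F.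
have vv' : (v' * v' = 1)%g by apply: lt_invol => //; exact: tperm2.
have [idx' [g' a' s']] := IH v' ltac:(lia) vv'.
exists (nat_of_ord p' :: idx'); split.
- by rewrite /= gi.
- by rewrite /= a' E /v' lt_back // tperm2.
- rewrite /=; lia.
Qed.

Lemma act_cat n (s1 s2 : seq nat) (v : 'S_n) : act_seq (s1 ++ s2) v = act_seq s1 (act_seq s2 v).
Proof. exact: foldr_cat. Qed.

Local Open Scope group_scope.

Theorem corollary2p14 (n : nat) (w : 'S_n) (idx : seq nat) :
  is_invol w ->
  all (is_gen_index n) idx ->
  reduced_seq idx w ->
  3 <= size idx ->
  nth 0%N idx (size idx - 3) = nth 0%N idx (size idx - 1) ->
  (nth 0%N idx (size idx - 1) = (nth 0%N idx (size idx - 2)).+1 \/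
   (nth 0%N idx (size idx - 1)).+1 = nth 0%N idx (size idx - 2)) ->
  let x := sgen n (nth 0%N idx (size idx - 1)) in
  let y := sgen n (nth 0%N idx (size idx - 2)) in
  let a := [&& x * w != w * x, y * x * w * x != x * w * x * y,
               x * y * x * w * x * y != y * x * w * x * y * x,
               y * w != w * y, x * y * w * y != y * w * y * x
             & y * x * y * w * y * x != x * y * w * y * x * y] in
  let b := [&& x * w != w * x, y * x * w * x != x * w * x * y,
               x * y * x * w * x * y == y * x * w * x * y * x,
               y * w == w * y, x * y * w != y * w * x
             & y * x * y * w * x != x * y * w * x * y] in
  let c := [&& x * w == w * x, y * x * w != x * w * y,
               x * y * x * w * y != y * x * w * y * x,
               y * w != w * y, x * y * w * y != y * w * y * x
             & y * x * y * w * y * x == x * y * w * y * x * y] in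
  [|| [&& a, ~~ b & ~~ c], [&& ~~ a, b & ~~ c] | [&& ~~ a, ~~ b & c]].
Proof.
move=> /eqP ww Hg [r [[[idx0 [s0 g0 a0]] _] [_ min]]] Hk e13 e12.
set k := size idx in Hk e13 e12 min *.
set i1 := nth 0 idx (k - 3) in e13 *.
set i2 := nth 0 idx (k - 2) in e12 *.
set i3 := nth 0 idx (k - 1) in e13 e12 *.
have Ew : Fv w <= 4 * r.
  by have [_] := act_bound g0 (mulg1 (1 : 'S_n)%g); rewrite a0 F1 s0.
have Hd : idx = take (k - 3) idx ++ [:: i1; i2; i3].
  rewrite -{1}(cat_take_drop (k - 3) idx); congr (_ ++ _).
  rewrite (drop_nth 0) ?(drop_nth 0 (n := (k - 3).+1)) ?(drop_nth 0 (n := (k - 3).+2)) ?drop_oversize /k;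
    try lia.
  rewrite /i1 /i2 /i3 /k (_ : (size idx - 3).+1 = size idx - 2); last lia.
  by rewrite (_ : (size idx - 2).+1 = size idx - 1) //; lia.
have gi : forall j, j < k -> is_gen_index n (nth 0 idx j).
  by move=> j hj; apply: (allP Hg); apply: mem_nth.
have g1 := gi (k - 3) ltac:(lia); have g2 := gi (k - 2) ltac:(lia); have g3 := gi (k - 1) ltac:(lia).
rewrite -/i1 in g1; rewrite -/i2 in g2; rewrite -/i3 in g3.
have gt : all (is_gen_index n) (take (k - 3) idx) by apply/allP => z /mem_take; apply: (allP Hg).
have [P3 [P3' [h3 h3' p3 E3]]] := gen_tperm g3.
have [P2 [P2' [h2 h2' p2 E2]]] := gen_tperm g2.
set v1 := ltimes (tperm P3 P3') w.
set v2 := ltimes (tperm P2 P2') v1.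
set v3 := ltimes (tperm P3 P3') v2.
have I1 : (v1 * v1 = 1)%g by apply: lt_invol => //; exact: tperm2.
have I2 : (v2 * v2 = 1)%g by apply: lt_invol => //; exact: tperm2.
have I3 : (v3 * v3 = 1)%g by apply: lt_invol => //; exact: tperm2.
have Afin : act_seq idx w = act_seq (take (k - 3) idx) v3.
  by rewrite {1}Hd act_cat /= e13 E3 E2.
have [_ Bf] := act_bound gt I3.
have [If _] := act_bound Hg ww.
have [idx1 [g1' a1 s1]] := word_exists If.
have M := min idx1 g1' a1.
rewrite -Afin -s1 size_take in Bf.
have hk3 : k - 3 < size idx by rewrite -/k; lia.
rewrite hk3 in Bf.
have S1 := @Fstep _ w P3 P3' ww p3.
have S2 := @Fstep _ v1 P2 P2' I1 p2.
have S3 := @Fstep _ v2 P3 P3' I2 p3.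
rewrite -/v1 in S1; rewrite -/v2 in S2; rewrite -/v3 in S3.
have key : Fv w + 12 <= Fv v3 by lia.
have [A1 [A2 A3]] : w P3 < w P3' /\ v1 P2 < v1 P2' /\ v2 P3 < v2 P3'.
  move: key S1 S2 S3; generalize (Fv w) (Fv v1) (Fv v2) (Fv v3) => f0 f1 f2 f3.
  by case: ifP => A1; case: ifP => A2; case: ifP => A3 => K S1 S2 S3; split => //; lia.
rewrite E3 E2.
case: e12 => e.
  have eP : P3 = P2' by apply: ord_inj; lia.
  subst P3.
  have L := @local_gen n w P2 P2' P3' 1 0 ww p2 ltac:(lia) erefl A1 A2 A3.
  exact: L.
have eP : P2 = P3' by apply: ord_inj; lia.
subst P2.
have L := @local_gen n w P3 P3' P2' 0 1 ww p3 ltac:(lia) erefl A1 A2 A3.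
exact: L.
Qed.
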